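(* Let $\mathbf{i}=(i_1,\dots,i_r)$, $\mathbf{j}=(j_1,\dots,j_r)$ be sequences of positive integers with equal sums $N$, and suppose $g=\det M(\mathbf{i};\mathbf{j})$ is nonzero and irreducible. Then every indeterminate in each of the blocks $A^k$, $k=1,\dots,r$, appears in the top homogeneous component of $g$.
   Context: $M(\mathbf{i};\mathbf{j})$ is the $N\times N$ matrix whose rows are divided into blocks of sizes $i_1,\dots,i_r$ (top to bottom) and columns into blocks of sizes $j_r,\dots,j_1$ (left to right; the block of size $j_t$ is column block $t$). Row block $s$ has an $i_s\times j_s$ matrix $A^s$ of indeterminates in column block $s$; for $s\ge 2$ the matrix $I_{i_s,j_{s-1}}$ in column block $s-1$; zeros in column blocks $t<s-1$; and indeterminates in column blocks $t>s$. $I_{c,d}$ is the $c\times d$ matrix with $1$s on its main diagonal and $0$s elsewhere. All indeterminates are distinct. The top homogeneous component of a polynomial is its homogeneous component of highest degree. *)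

(* Defs.v *)
From HB Require Import structures.
From mathcomp Require Import all_boot all_order all_algebra.
From mathcomp Require Import mpoly.
Set Implicit Arguments. Unset Strict Implicit. Unset Printing Implicit Defensive.
Import Order.TTheory GRing.Theory.
Local Open Scope ring_scope.

(* Index (0-based) of the block containing position [p], for consecutive
   blocks of sizes [sz] (listed in order starting from position 0). *)
Definition blk (sz : seq nat) (p : nat) : nat :=
  find (fun s => (p < sumn (take s.+1 sz))%N) (iota 0 (size sz)).

Definition boff (sz : seq nat) (p : nat) : nat :=
  (p - sumn (take (blk sz p) sz))%N.

(* Row p lies in row block (rowblk i p).+1 (blocks i_1,...,i_r from the top). *)
Definition rowblk (i : seq nat) (p : nat) : nat := blk i p.
Definition rowoff (i : seq nat) (p : nat) : nat := boff i p.

(* Columns are divided into blocks of sizes j_r,...,j_1 from left to right;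
   the block of size j_t is column block t.  Column q lies in column block
   (colblk j q).+1 (0-based index t-1). *)
Definition colblk (j : seq nat) (q : nat) : nat :=
  ((size j).-1 - blk (rev j) q)%N.
Definition coloff (j : seq nat) (q : nat) : nat := boff (rev j) q.

Definition Nsz (i : seq nat) : nat := sumn i.

(* The indeterminate placed at position (p,q) is the variable 'X_(p,q) of
   the polynomial ring in N*N variables over K (variables at positions that
   carry constants are simply unused). *)
Definition Mvar (N : nat) (p q : 'I_N) : 'I_(N * N) := mxvec_index p q.

Definition Mij (K : fieldType) (i j : seq nat) :
  'M[{mpoly K[Nsz i * Nsz i]}]_(Nsz i) :=
  \matrix_(p < Nsz i, q < Nsz i)
    let s := rowblk i p in
    let t := colblk j q in
    if (s <= t)%N then 'X_(Mvar p q)                      (* A^s and blocks t > s *)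
    else if (t.+1 == s)%N then
      (rowoff i p == coloff j q)%:R                      (* I_{i_s, j_{s-1}} *)
    else 0.

Definition irreducible_elt (R : comUnitRingType) (g : R) : Prop :=
  [/\ g != 0, g \isn't a GRing.unit &
      forall a b : R, g = a * b -> a \is a GRing.unit \/ b \is a GRing.unit].

(* Top homogeneous component: the homogeneous component of total degree
   (msize g).-1, the highest degree occurring in g. *)
Definition tophom (n : nat) (K : fieldType) (g : {mpoly K[n]}) : {mpoly K[n]} :=
  pihomog mdeg (msize g).-1 g.

Definition appears (n : nat) (K : fieldType) (k : 'I_n) (g : {mpoly K[n]}) : Prop :=
  exists2 m, m \in msupp g & (0 < m k)%N.

(* Main.v *)
Require Import Defs.
From HB Require Import structures.
From mathcomp Require Import all_boot all_order all_algebra.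
From mathcomp Require Import mpoly.
From mathcomp Require Import perm zify.
Set Implicit Arguments. Unset Strict Implicit. Unset Printing Implicit Defensive.
Import Order.TTheory GRing.Theory.

Lemma sumn_take_mono (sz : seq nat) a b : a <= b -> sumn (take a sz) <= sumn (take b sz).
Proof. by move=> le; rewrite -(subnKC le) takeD sumn_cat leq_addr. Qed.

Lemma sumn_take_le (sz : seq nat) a : sumn (take a sz) <= sumn sz.
Proof. by rewrite -{2}(cat_take_drop a sz) sumn_cat leq_addr. Qed.

Lemma blk_spec sz p : p < sumn sz ->
  blk sz p < size sz /\ sumn (take (blk sz p) sz) <= p < sumn (take (blk sz p).+1 sz).
Proof.
move=> hp.
have szp : 0 < size sz by case: sz hp.
set a := (fun s => p < sumn (take s.+1 sz)).
have hhas : has a (iota 0 (size sz)).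
  apply/hasP; exists (size sz).-1; first by rewrite mem_iota add0n prednK ?leqnn.
  by rewrite /a prednK // take_size.
have lt : blk sz p < size sz.
  by move: (hhas); rewrite has_find size_iota.
split => //.
have := nth_find 0 hhas; rewrite -/(blk sz p) nth_iota // add0n /a => ->.
rewrite andbT.
case E: (blk sz p) => [|b]; first by rewrite take0.
have hb : b < find a (iota 0 (size sz)) by rewrite -/(blk sz p) E.
have := before_find 0 hb; rewrite nth_iota ?add0n; last by rewrite -E ltnW.
by rewrite /a => /negbT; rewrite -leqNgt.
Qed.

Lemma blk_uniq sz p s : s < size sz ->
  sumn (take s sz) <= p < sumn (take s.+1 sz) -> blk sz p = s.
Proof.
move=> hs /andP[h1 h2].
have hp : p < sumn sz by apply: leq_trans h2 (sumn_take_le _ _).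
have [hb /andP[h3 h4]] := blk_spec hp.
case: (ltngtP (blk sz p) s) => // hc.
- have := sumn_take_mono sz hc; lia.
- have := sumn_take_mono sz hc; lia.
Qed.

Lemma sumn_drop (s : seq nat) k : sumn (drop k s) = sumn s - sumn (take k s).
Proof. by rewrite -{2}(cat_take_drop k s) sumn_cat addKn. Qed.

Section Core.
Variables (i j : seq nat).
Hypothesis hsz : size i = size j.
Hypothesis hsum : sumn i = sumn j.

Definition PP s := sumn (take s i).
Definition QQ s := sumn (take s j).

Lemma PP_mono a b : a <= b -> PP a <= PP b. Proof. exact: sumn_take_mono. Qed.
Lemma QQ_mono a b : a <= b -> QQ a <= QQ b. Proof. exact: sumn_take_mono. Qed.
Lemma PP_le a : PP a <= sumn i. Proof. exact: sumn_take_le. Qed.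
Lemma QQ_le a : QQ a <= sumn i. Proof. rewrite hsum; exact: sumn_take_le. Qed.
Lemma PP0 : PP 0 = 0. Proof. by rewrite /PP take0. Qed.
Lemma QQ0 : QQ 0 = 0. Proof. by rewrite /QQ take0. Qed.
Lemma PPr a : size i <= a -> PP a = sumn i. Proof. by move=> h; rewrite /PP take_oversize. Qed.
Lemma QQr a : size i <= a -> QQ a = sumn i. Proof. by move=> h; rewrite /QQ take_oversize // -hsz. Qed.

Lemma rb_spec p : p < sumn i ->
  rowblk i p < size i /\ PP (rowblk i p) <= p < PP (rowblk i p).+1.
Proof. exact: blk_spec. Qed.

Lemma rb_uniq p s : s < size i -> PP s <= p < PP s.+1 -> rowblk i p = s.
Proof. exact: blk_uniq. Qed.

Lemma roE p : rowoff i p = p - PP (rowblk i p).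
Proof. by []. Qed.

Lemma cb_spec q : q < sumn i ->
  [/\ colblk j q < size i, QQ (colblk j q) <= (sumn i).-1 - q < QQ (colblk j q).+1
    & coloff j q = QQ (colblk j q).+1 - (sumn i - q)].
Proof.
move=> hq.
have hq' : q < sumn (rev j) by rewrite sumn_rev -hsum.
have [hb /andP[h1 h2]] := blk_spec hq'.
rewrite /coloff /boff /colblk.
move: hb h1 h2; rewrite size_rev => hb.
rewrite !take_rev !sumn_rev !sumn_drop -!hsum -!/(QQ _) -hsz.
set b := blk (rev j) q.
have e1 : ((size i).-1 - b).+1 = size i - b by lia.
have e2 : size i - b.+1 = (size i).-1 - b by lia.
rewrite e1 -e2.
have := QQ_le (size i - b); have := QQ_le (size i - b.+1).
have := QQ_mono (leq_subr 1 (size i - b)).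
rewrite subnS.
move=> *; split; lia.
Qed.

Lemma cb_uniq q t : t < size i -> q < sumn i ->
  QQ t <= (sumn i).-1 - q < QQ t.+1 -> colblk j q = t.
Proof.
move=> ht hq /andP[h1 h2].
have [hb /andP[h3 h4] _] := cb_spec hq.
case: (ltngtP (colblk j q) t) => // hc.
- have := QQ_mono hc; lia.
- have := QQ_mono hc; lia.
Qed.

End Core.

Lemma card_ord_pred n (f : nat -> bool) :
  #|[set x : 'I_n | f x]| = \sum_(0 <= x < n) f x.
Proof.
rewrite -sum1_card big_mkord [RHS]big_mkcond /=.
rewrite big_mkcond /=; apply: eq_bigr => x _; rewrite inE; by case: (f x).
Qed.

Lemma card_ord_ge n a : #|[set x : 'I_n | a <= x]| = n - a.
Proof.
rewrite card_ord_pred; elim: n => [|n IH]; first by rewrite big_geq.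
rewrite big_nat_recr //= IH; case: (leqP a n) => h /=; lia.
Qed.

Lemma card_ord_lt n b : #|[set x : 'I_n | x < b]| = minn b n.
Proof.
rewrite (card_ord_pred n (fun x => x < b)); elim: n => [|n IH]; first by rewrite big_geq // minn0.
rewrite big_nat_recr //= IH; case: (leqP b n) => h /=; lia.
Qed.

Section Comb.
Variables (i j : seq nat).
Hypothesis hsz : size i = size j.
Hypothesis hsum : sumn i = sumn j.

Local Notation N := (Nsz i).
Local Notation rb := (rowblk i).
Local Notation cb := (colblk j).
Local Notation PP := (PP i).
Local Notation QQ := (QQ j).

Definition isv (p q : nat) := rb p <= cb q.
Definition ison (p q : nat) := ((cb q).+1 == rb p) && (rowoff i p == coloff j q).

Lemma ison_nisv p q : ison p q -> ~~ isv p q.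
Proof. by rewrite /ison /isv -ltnNge => /andP[/eqP <- _]. Qed.

Lemma rb_ge t x : x < N -> (t <= rb x) = (PP t <= x).
Proof.
move=> hx; have [h1 /andP[h2 h3]] := rb_spec hx.
case: (leqP t (rb x)) => h.
- by have := PP_mono i h; lia.
- by have := PP_mono i h; lia.
Qed.

Lemma cb_ge t y : y < N -> (t <= cb y) = (QQ t <= N.-1 - y).
Proof.
move=> hy; have [h1 /andP[h2 h3] _] := cb_spec hsz hsum hy.
case: (leqP t (cb y)) => h.
- by have := QQ_mono j h; rewrite /Nsz; lia.
- by have := QQ_mono j h; rewrite /Nsz; lia.
Qed.

Lemma one_row_uniq p c1 c2 : c1 < N -> c2 < N -> ison p c1 -> ison p c2 -> c1 = c2.
Proof.
move=> h1 h2 /andP[/eqP e1 /eqP o1] /andP[/eqP e2 /eqP o2].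
have [_ /andP[a1 b1] d1] := cb_spec hsz hsum h1.
have [_ /andP[a2 b2] d2] := cb_spec hsz hsum h2.
have et : cb c1 = cb c2 by lia.
rewrite et in a1 b1 d1; rewrite /Nsz in h1 h2; lia.
Qed.

Lemma one_col_uniq p1 p2 c : p1 < N -> p2 < N -> ison p1 c -> ison p2 c -> p1 = p2.
Proof.
move=> h1 h2 /andP[/eqP e1 /eqP o1] /andP[/eqP e2 /eqP o2].
have [_ /andP[a1 b1]] := rb_spec h1.
have [_ /andP[a2 b2]] := rb_spec h2.
rewrite !roE in o1 o2.
have et : rb p1 = rb p2 by lia.
rewrite et in a1 b1 o1; lia.
Qed.

Definition valid (s : 'S_(N)) := [forall x : 'I_(N), isv x (s x) || ison x (s x)].
Definition VS (s : 'S_(N)) := [set x : 'I_(N) | isv x (s x)].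
Definition nv (s : 'S_(N)) := #|VS s|.
Definition MS (s : 'S_(N)) t := [set x : 'I_(N) | (rb x == t) && ison x (s x)].
Definition ms (s : 'S_(N)) t := #|MS s t|.

Lemma validP (s : 'S_(N)) (x : 'I_(N)) : valid s -> isv x (s x) || ison x (s x).
Proof. by move/forallP. Qed.

Lemma card_rb_ge t : #|[set x : 'I_(N) | t <= rb x]| = N - PP t.
Proof.
rewrite -card_ord_ge; apply: eq_card => x; rewrite !inE rb_ge //.
Qed.

Lemma card_cb_ge t : #|[set y : 'I_(N) | t <= cb y]| = N - QQ t.
Proof.
have -> : [set y : 'I_(N) | t <= cb y] = [set y : 'I_(N) | y < N - QQ t].
  apply/setP => y; rewrite !inE cb_ge //; have := ltn_ord y; lia.
rewrite card_ord_lt; lia.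
Qed.

Lemma cut_ms (s : 'S_(N)) t : valid s -> QQ t - PP t <= ms s t.
Proof.
move=> vs.
set A := [set x : 'I_(N) | t <= rb x].
have sub : s @: (A :\: MS s t) \subset [set y : 'I_(N) | t <= cb y].
  apply/subsetP => y /imsetP[x]; rewrite !inE => /andP[hn hA] ->.
  case/orP: (validP x vs) => [hv|ho]; first by apply: leq_trans hA hv.
  move: hn; rewrite ho andbT; move: ho => /andP[/eqP e _] hn.
  rewrite -e in hA hn; rewrite -ltnS; rewrite leq_eqVlt in hA.
  by case/orP: hA => // /eqP et; rewrite et eqxx in hn.
have := subset_leq_card sub.
rewrite card_imset; last exact: perm_inj.
rewrite card_cb_ge cardsD card_rb_ge.
have -> : A :&: MS s t = MS s t.
  apply/setIidPr/subsetP => x; rewrite !inE => /andP[/eqP <- _]; exact: leqnn.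
rewrite /ms; have := PP_le i t; have := QQ_le hsum t; rewrite /Nsz; move: #|MS s t| => m; lia.
Qed.

Lemma cut2 (s : 'S_(N)) t : valid s -> 0 < t -> QQ t.-1 <= PP t.
Proof.
move=> vs t0.
set A := [set x : 'I_(N) | t <= rb x].
have sub : s @: A \subset [set y : 'I_(N) | t.-1 <= cb y].
  apply/subsetP => y /imsetP[x]; rewrite !inE => hA ->.
  case/orP: (validP x vs) => [hv|/andP[/eqP e _]].
  - by apply: leq_trans (leq_pred _) (leq_trans hA hv).
  - by rewrite -e in hA; lia.
have := subset_leq_card sub.
rewrite card_imset; last exact: perm_inj.
rewrite card_cb_ge card_rb_ge.
have := PP_le i t; have := QQ_le hsum t.-1; rewrite /Nsz; lia.
Qed.

End Comb.

Lemma card_ord_btw n a b : #|[set x : 'I_n | a <= x < b]| = minn b n - a.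
Proof.
rewrite (card_ord_pred n (fun x => a <= x < b)); elim: n => [|n IH]; first by rewrite big_geq // minn0.
rewrite big_nat_recr //= IH; case: (leqP a n) => h1; case: (leqP b n) => h2 /=; lia.
Qed.

Lemma sum_ind1 r t0 : t0 < r -> \sum_(0 <= t < r) (t0 == t : nat) = 1.
Proof.
move=> h.
rewrite (eq_big_nat _ _ (F2 := fun t => if t == t0 then 1 else 0)); last first.
  by move=> x _; rewrite eq_sym; case: (x == t0).
by rewrite -big_mkcond big_nat1_eq h.
Qed.

Lemma sum_tight r (f g : nat -> nat) :
  (forall t, t < r -> f t <= g t) ->
  \sum_(0 <= t < r) f t = \sum_(0 <= t < r) g t ->
  forall t, t < r -> g t <= f t.
Proof.
move=> le eqs t ht.
have e : \sum_(0 <= t < r) g t = \sum_(0 <= t < r) f t + \sum_(0 <= t < r) (g t - f t).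
  rewrite -big_split /=; apply: eq_big_nat => x /andP[_ hx]; rewrite subnKC //; exact: le.
have : \sum_(0 <= t < r) (g t - f t) == 0 by rewrite -eqs in e; apply/eqP; lia.
rewrite sum_nat_seq_eq0 => /allP/(_ t); rewrite mem_iota add0n subn0 => /(_ ht) /=.
rewrite subn_eq0; exact.
Qed.

Section Canon.
Variables (i j : seq nat).
Hypothesis hsz : size i = size j.
Hypothesis hsum : sumn i = sumn j.
Hypothesis hc2 : forall t, 0 < t -> QQ j t.-1 <= PP i t.

Local Notation N := (Nsz i).
Local Notation rb := (rowblk i).
Local Notation cb := (colblk j).
Local Notation PP := (PP i).
Local Notation QQ := (QQ j).
Local Notation isv := (isv i j).
Local Notation ison := (ison i j).
Local Notation valid := (@valid i j).
Local Notation ms := (@ms i j).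
Local Notation MS := (@MS i j).
Local Notation nv := (@nv i j).
Local Notation VS := (@VS i j).

Definition fc p := if p < QQ (rb p) then PP (rb p) + QQ (rb p) - 1 - p else p.

Lemma fc_lt p : p < N -> fc p < N.
Proof.
move=> hp; rewrite /fc; case: ifP => // h.
have [_ /andP[h1 h2]] := rb_spec hp; have := QQ_le hsum (rb p); rewrite /Nsz in hp *; lia.
Qed.

Lemma fc_rb p : p < N -> p < QQ (rb p) -> rb (fc p) = rb p.
Proof.
move=> hp h; have [hr /andP[h1 h2]] := rb_spec hp.
have := hc2 (ltn0Sn (rb p)); rewrite /= => h3.
apply: rb_uniq => //; rewrite /fc h; lia.
Qed.

Lemma fcK p : p < N -> fc (fc p) = p.
Proof.
move=> hp; have [hr /andP[h1 h2]] := rb_spec hp.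
case h: (p < QQ (rb p)); last by rewrite /fc h h.
have hf : fc p = PP (rb p) + QQ (rb p) - 1 - p by rewrite /fc h.
rewrite {1}/fc fc_rb // hf; case: ifP => c; lia.
Qed.

Lemma sc_lt (x : 'I_N) : N.-1 - fc x < N.
Proof. have := ltn_ord x; lia. Qed.

Definition scf (x : 'I_N) : 'I_N := Ordinal (sc_lt x).

Lemma scf_inj : injective scf.
Proof.
move=> x y /(congr1 val) /= e.
have hx := fc_lt (ltn_ord x); have hy := fc_lt (ltn_ord y).
have : fc (fc x) = fc (fc y) by congr fc; lia.
by rewrite !fcK // => /ord_inj.
Qed.

Definition sigc : 'S_(N) := perm scf_inj.

Lemma sigcE x : val (sigc x) = N.-1 - fc x.
Proof. by rewrite permE. Qed.

Lemma PPN a : PP a <= N. Proof. exact: PP_le. Qed.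
Lemma QQN a : QQ a <= N. Proof. exact: QQ_le. Qed.

Lemma sigc_valid : valid sigc.
Proof.
apply/forallP => x; have hx := ltn_ord x.
have [hr /andP[h1 h2]] := rb_spec hx.
case h: (x < QQ (rb x)).
- apply/orP; right.
  have hs : 0 < rb x by case E: (rb x) h => [|s]; rewrite ?QQ0.
  have := hc2 hs => h3.
  have hfx : fc x = PP (rb x) + QQ (rb x) - 1 - x by rewrite /fc h.
  have hq := QQN (rb x).
  have hc : cb (sigc x) = (rb x).-1.
    apply: cb_uniq => //; rewrite ?sigcE ?hfx ?prednK // -?hsum -/(Nsz i) -?hsz;
    try (apply/andP; split); lia.
  have [_ _ hco] := cb_spec hsz hsum (ltn_ord (sigc x)).
  rewrite /ison hc prednK // eqxx /= hco hc prednK // sigcE hfx roE -/(Nsz i).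
  apply/eqP; lia.
- apply/orP; left; rewrite /isv (cb_ge hsz hsum) // sigcE /fc h; lia.
Qed.

Lemma ms_sigc t : ms sigc t <= QQ t - PP t.
Proof.
have sub : MS sigc t \subset [set x : 'I_N | PP t <= x < QQ t].
  apply/subsetP => x; rewrite !inE => /andP[/eqP ht ho].
  have hx := ltn_ord x; have [hr /andP[h1 h2]] := rb_spec hx.
  rewrite -ht h1 /=; rewrite ltnNge; apply/negP => hge.
  have := ison_nisv ho; rewrite /isv (cb_ge hsz hsum) // sigcE /fc ltnNge hge /=.
  lia.
have := subset_leq_card sub; rewrite card_ord_btw /ms; lia.
Qed.

Definition OS (s : 'S_(N)) := [set x : 'I_N | ison x (s x)].

Lemma nv_OS s : valid s -> nv s + #|OS s| = N.
Proof.
move=> vs; have -> : OS s = ~: VS s.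
  apply/setP => x; rewrite !inE; case/orP: (validP x vs) => h.
  - by rewrite h; apply/negbTE; apply: contraTN h => /ison_nisv.
  - by rewrite h (negbTE (ison_nisv h)).
by rewrite cardsC card_ord.
Qed.

Lemma OS_sum s : #|OS s| = \sum_(0 <= t < size i) ms s t.
Proof.
rewrite -sum1_card.
rewrite (eq_bigr (fun x : 'I_N => \sum_(0 <= t < size i) (rb x == t : nat))); last first.
  by move=> x _; rewrite sum_ind1 //; have [] := rb_spec (ltn_ord x).
rewrite exchange_big /=; apply: eq_bigr => t _.
rewrite /ms -sum1_card big_mkcond [RHS]big_mkcond /=; apply: eq_bigr => x _.
by rewrite !inE; case: (ison _ _); case: (rb x == t).
Qed.

Lemma nv_max s : valid s -> nv s <= nv sigc.
Proof.
move=> vs; have e1 := nv_OS vs; have e2 := nv_OS sigc_valid.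
have : #|OS sigc| <= #|OS s|.
  rewrite !OS_sum; apply: leq_sum => t _.
  apply: leq_trans (ms_sigc t) _; exact: cut_ms.
lia.
Qed.

Lemma tight s : valid s -> nv s = nv sigc -> forall t, t < size i -> ms s t <= QQ t - PP t.
Proof.
move=> vs en t ht; have e1 := nv_OS vs; have e2 := nv_OS sigc_valid.
have eo : #|OS sigc| = #|OS s| by lia.
rewrite !OS_sum in eo.
have hle : forall u, u < size i -> ms sigc u <= ms s u.
  by move=> u hu; apply: leq_trans (ms_sigc u) _; exact: cut_ms.
have := sum_tight hle eo ht.
move=> h; apply: leq_trans h (ms_sigc t).
Qed.

End Canon.

Section Exch.
Variables (i j : seq nat).
Hypothesis hsz : size i = size j.
Hypothesis hsum : sumn i = sumn j.

Local Notation N := (Nsz i).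
Local Notation rb := (rowblk i).
Local Notation cb := (colblk j).
Local Notation PP := (PP i).
Local Notation QQ := (QQ j).
Local Notation isv := (isv i j).
Local Notation ison := (ison i j).
Local Notation valid := (@valid i j).
Local Notation ms := (@ms i j).
Local Notation MS := (@MS i j).
Local Notation nv := (@nv i j).
Local Notation VS := (@VS i j).

Lemma swap_valid_nv (s : 'S_(N)) (a y : 'I_N) :
  valid s -> isv a (s a) -> isv y (s y) -> isv y (s a) -> isv a (s y) ->
  let s' := (tperm a y * s)%g in [/\ valid s', nv s' = nv s & s' a = s y].
Proof.
move=> vs ha hy hya hay s'.
have E : forall x, s' x = s (tperm a y x) by move=> x; rewrite permM.
split; last by rewrite E tpermL.
- apply/forallP => x; rewrite E; case: tpermP => [->|->|_ _].
  + by rewrite hay.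
  + by rewrite hya.
  + exact: validP.
- rewrite /nv; apply: eq_card => x; rewrite !inE E.
  by case: tpermP => [->|->|_ _]; rewrite ?ha ?hy ?hya ?hay.
Qed.

Lemma exch (s : 'S_(N)) (a b c : 'I_N) :
  valid s -> ison a (s a) -> rb b = rb a -> isv b (s b) -> ison b c ->
  exists s' : 'S_(N), [/\ valid s', nv s' = nv s, isv a (s' a),
     (forall x, x != b -> isv x (s x) -> isv x (s' x)) &
     exists y, s' y = s a /\ isv y (s a)].
Proof.
move=> vs hoa hrb hvb hob.
set d := (s^-1)%g c.
have hsd : s d = c by rewrite permKV.
have nab : a != b.
  by apply/eqP => eab; move: hvb; rewrite -eab; move/ison_nisv: hoa => /negbTE ->.
have ndb : d != b.
  apply/eqP => edb; move: hvb; rewrite -edb hsd.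
  by rewrite -edb in hob; move/ison_nisv: hob => /negbTE ->.
have nda : d != a.
  apply/eqP => eda; move: hoa; rewrite -eda hsd => hod.
  by move/eqP: ndb; apply; apply: val_inj; exact: (one_col_uniq hsz hsum (ltn_ord d) (ltn_ord b) hod hob).
have hvd : isv d c.
  case/orP: (validP d vs); rewrite hsd // => hod.
  by exfalso; move/eqP: ndb; apply; apply: val_inj; exact: (one_col_uniq hsz hsum (ltn_ord d) (ltn_ord b) hod hob).
set s2 := (tperm b d * (tperm a b * s))%g.
have E : forall x, s2 x = s (tperm a b (tperm b d x)) by move=> x; rewrite !permM.
have Ea : s2 a = s b.
  by rewrite E (tpermD (x:=b)) 1?eq_sym // ?tpermL // eq_sym.
have Eb : s2 b = c by rewrite E tpermL tpermD // eq_sym.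
have Ed : s2 d = s a by rewrite E tpermR tpermR.
have Eo : forall x, x != a -> x != b -> x != d -> s2 x = s x.
  by move=> x xa xb xd; rewrite E !tpermD // eq_sym.
move: hoa hob => /[dup] hoa /andP[/eqP ea _] /[dup] hob /andP[/eqP eb _].
have hva : isv a (s b) by rewrite /isv -hrb.
have hvda : isv d (s a) by move: hvd; rewrite /isv; lia.
exists s2; split.
- apply/forallP => x.
  case: (eqVneq x a) => [->|xa]; first by rewrite Ea hva.
  case: (eqVneq x b) => [->|xb]; first by rewrite Eb hob orbT.
  case: (eqVneq x d) => [->|xd]; first by rewrite Ed hvda.
  by rewrite Eo //; exact: validP.
- rewrite /nv.
  have -> : VS s2 = a |: (VS s :\ b).
    apply/setP => x; rewrite !inE.
    case: (eqVneq x a) => [->|xa]; first by rewrite Ea hva.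
    case: (eqVneq x b) => [->|xb]; first by rewrite Eb (negbTE (ison_nisv hob)).
    case: (eqVneq x d) => [->|xd]; first by rewrite Ed hvda hsd hvd.
    by rewrite Eo.
  rewrite cardsU1 !inE (negbTE (ison_nisv hoa)) andbF /=.
  by rewrite (cardsD1 b (VS s)) !inE hvb.
- by rewrite Ea.
- move=> x xb hx.
  case: (eqVneq x a) => [->|xa]; first by rewrite Ea.
  case: (eqVneq x d) => [->|xd]; first by rewrite Ed.
  by rewrite Eo.
- by exists d; rewrite Ed.
Qed.

End Exch.

Section Main.
Variables (i j : seq nat).
Hypothesis hsz : size i = size j.
Hypothesis hsum : sumn i = sumn j.
Hypothesis hc2 : forall t, 0 < t -> QQ j t.-1 <= PP i t.
Hypothesis hC : forall t, 0 < t -> t < size i -> PP i t < QQ j t ->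
  QQ j t.-1 < PP i t /\ QQ j t < PP i t.+1.

Local Notation N := (Nsz i).
Local Notation rb := (rowblk i).
Local Notation cb := (colblk j).
Local Notation PP := (PP i).
Local Notation QQ := (QQ j).
Local Notation isv := (isv i j).
Local Notation ison := (ison i j).
Local Notation valid := (@valid i j).
Local Notation ms := (@ms i j).
Local Notation MS := (@MS i j).
Local Notation nv := (@nv i j).
Local Notation VS := (@VS i j).
Local Notation sigc := (sigc hsz hsum hc2).

Lemma step (s : 'S_(N)) (a : 'I_N) :
  valid s -> nv s = nv sigc -> ison a (s a) ->
  exists s' : 'S_(N), [/\ valid s', nv s' = nv sigc, isv a (s' a),
     (forall x : 'I_N, rb x != rb a -> isv x (s x) -> isv x (s' x)) &
     exists y, s' y = s a /\ isv y (s a)].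
Proof.
move=> vs ns hoa.
have [hr /andP[ha1 ha2]] := rb_spec (ltn_ord a).
set t := rb a in hr ha1 ha2 *.
have t0 : 0 < t by move: hoa => /andP[/eqP e _]; rewrite /t -e.
have hm : 0 < ms s t by apply/card_gt0P; exists a; rewrite !inE eqxx hoa.
have ht := tight vs ns hr.
have hlt : PP t < QQ t by lia.
have [h1 h2] := hC t0 hr hlt.
have hN := PPN i t.+1.
set Cand := [set x : 'I_N | PP t <= x < QQ t + 1].
have hcard : #|Cand| = QQ t + 1 - PP t by rewrite card_ord_btw; lia.
have : ~~ (Cand \subset MS s t).
  apply/negP => /subset_leq_card; rewrite hcard -/(ms s t); lia.
case/subsetPn => b; rewrite !inE => /andP[hb1 hb2] hbn.
have hrb : rb b = t by apply: rb_uniq => //; apply/andP; split; lia.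
have hvb : isv b (s b).
  case/orP: (validP b vs) => // hob; by rewrite hrb eqxx hob in hbn.
have hcl : N.-1 - (PP t + QQ t - 1 - b) < N by have := ltn_ord b; lia.
set c := Ordinal hcl.
have hq := QQN hsum t.
have hcb : cb c = t.-1.
  apply: cb_uniq => //=; rewrite -?hsum -/(Nsz i) ?prednK //; try (apply/andP; split); lia.
have hob : ison b c.
  have [_ _ hco] := cb_spec hsz hsum (ltn_ord c).
  rewrite /ison hcb prednK // hrb eqxx /= hco hcb prednK // roE hrb /= -/(Nsz i).
  apply/eqP; have := ltn_ord b; lia.
have [s2 [v2 n2 a2 x2 y2]] := exch hsz hsum vs hoa hrb hvb hob.
exists s2; split => //; first by rewrite n2.
move=> x hx; apply: x2; apply: contraNneq hx => ->; by rewrite hrb.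
Qed.

Lemma comb_main (p0 q0 : 'I_N) : rb p0 = cb q0 ->
  exists s : 'S_(N), [/\ valid s, s p0 = q0 & forall t, valid t -> nv t <= nv s].
Proof.
move=> e.
have vc := sigc_valid hsz hsum hc2.
have [s1 [v1 n1 p1]] : exists s1 : 'S_(N), [/\ valid s1, nv s1 = nv sigc & isv p0 (s1 p0)].
  case/orP: (validP p0 vc) => h; first by exists sigc.
  have [s' [v' n' a' _ _]] := step vc erefl h.
  by exists s'.
have [s2 [v2 n2 p2 [y [ey vy]]]] : exists s2 : 'S_(N), [/\ valid s2, nv s2 = nv sigc,
    isv p0 (s2 p0) & exists y, s2 y = q0 /\ isv y q0].
  set y := (s1^-1)%g q0.
  have ey : s1 y = q0 by rewrite permKV.
  case/orP: (validP y v1); rewrite ey => h.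
  - by exists s1; split => //; exists y.
  - rewrite -ey in h; have [s' [v' n' a' x' [y' [ey' vy']]]] := step v1 n1 h; rewrite ey in h.
    exists s'; split => //.
    + apply: x' => //; move: h => /andP[/eqP h _]; rewrite -h -e.
      by apply/eqP; lia.
    + by exists y'; rewrite ey' -ey.
have hy2 : isv y (s2 y) by rewrite ey.
have hyp : isv y (s2 p0) by move: vy p2; rewrite /isv e; lia.
have hpy : isv p0 (s2 y) by rewrite ey /isv e.
have [v3 n3 e3] := swap_valid_nv v2 p2 hy2 hyp hpy.
exists (tperm p0 y * s2)%g; split => //; first by rewrite e3.
move=> t vt; rewrite n3 n2; exact: nv_max.
Qed.

End Main.

Local Open Scope ring_scope.

Lemma Mvar_inj n (p q p' q' : 'I_n) : Mvar p q = Mvar p' q' -> p = p' /\ q = q'.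
Proof. by rewrite /Mvar /mxvec_index => /cast_ord_inj/enum_rank_inj [-> ->]. Qed.

Section Mat.
Variables (K : fieldType) (i j : seq nat).
Hypothesis hsz : size i = size j.
Hypothesis hsum : sumn i = sumn j.

Local Notation N := (Nsz i).
Local Notation rb := (rowblk i).
Local Notation cb := (colblk j).
Local Notation isv := (isv i j).
Local Notation ison := (ison i j).
Local Notation valid := (@valid i j).
Local Notation nv := (@nv i j).
Local Notation VS := (@VS i j).
Local Notation M := (Mij K i j).

Definition mon (s : 'S_(N)) : 'X_{1..N * N} :=
  (\sum_(x : 'I_N | isv x (s x)) U_(Mvar x (s x)))%MM.

Lemma M_entry (p q : 'I_N) :
  M p q = if isv p q then 'X_(Mvar p q) else if ison p q then 1 else 0.
Proof.
rewrite /Mij mxE /= /isv /ison; case: ifP => // _.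
by case: ifP => //= _; case: ifP.
Qed.

Lemma prod_term (s : 'S_(N)) :
  \prod_x M x (s x) = if valid s then 'X_[mon s] else 0.
Proof.
case: ifP => vs.
- rewrite /mon (big_morph _ (@mpolyXD _ K) (@mpolyX0 _ K)).
  rewrite [RHS]big_mkcond /=; apply: eq_bigr => x _.
  rewrite M_entry; case: ifP => // hv.
  case/orP: (validP x vs) => h; first by rewrite h in hv.
  by rewrite h.
- move/negbT: vs => /forallPn [x]; rewrite negb_or => /andP[h1 h2].
  by rewrite (bigD1 x) //= M_entry (negbTE h1) (negbTE h2) mul0r.
Qed.

Lemma monE (s : 'S_(N)) (p c : 'I_N) :
  mon s (Mvar p c) = (isv p (s p) && (s p == c)).
Proof.
rewrite /mon mnm_sumE.
rewrite (eq_bigr (fun x => ((x == p) && (s x == c) : nat))); last first.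
  move=> x _; rewrite mnm1E; case: eqP => [/Mvar_inj [-> ->]|ne]; first by rewrite !eqxx.
  by case: eqP => // ex; case: eqP => // ec; case: ne; subst x; rewrite ec.
rewrite big_mkcond (bigD1 p) //= big1 ?addn0.
- by rewrite eqxx; case: (isv _ _).
- by move=> x /negbTE ->; rewrite /=; case: (isv _ _).
Qed.

Lemma mdeg_mon (s : 'S_(N)) : mdeg (mon s) = nv s.
Proof.
rewrite /mon mdeg_sum /nv -sum1_card.
rewrite (eq_bigr (fun _ => 1%N)); last by move=> x _; rewrite mdeg1.
by apply: eq_bigl => x; rewrite inE.
Qed.

Lemma mon_inj (s t : 'S_(N)) : valid s -> valid t -> mon s = mon t -> s = t.
Proof.
move=> vs vt e.
have key : forall (u v : 'S_(N)), mon u = mon v -> forall x : 'I_N, isv x (u x) -> v x = u x /\ isv x (v x).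
  move=> u v euv x hx.
  have := monE v x (u x); rewrite -euv monE hx eqxx /=.
  by case: (isv x (v x)) => //=; case: eqP => // ->.
apply/permP => x.
case/orP: (validP x vs) => hs.
- by have [] := key _ _ e x hs.
- case/orP: (validP x vt) => ht.
  + have [e1 e2] := key _ _ (esym e) x ht.
    by rewrite e1 in hs; have := ison_nisv hs; rewrite ht.
  + apply: val_inj; exact: (one_row_uniq hsz hsum (ltn_ord _) (ltn_ord _) hs ht).
Qed.

Lemma mcoeff_sign (b : bool) (p : {mpoly K[N * N]}) m :
  ((-1) ^+ b * p)@_m = (-1) ^+ b * p@_m.
Proof. by case: b; rewrite ?expr0 ?expr1 ?mul1r ?mulN1r ?mcoeffN. Qed.

Lemma coef_det m :
  (\det M)@_m = \sum_(s : 'S_(N)) (-1) ^+ s * ((valid s && (mon s == m))%:R).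
Proof.
rewrite /determinant raddf_sum /=; apply: eq_bigr => s _.
rewrite mcoeff_sign prod_term; case: (valid s) => /=; last by rewrite mcoeff0.
by rewrite mcoeffX.
Qed.

Lemma coef_mon (s0 : 'S_(N)) : valid s0 -> (\det M)@_(mon s0) = (-1) ^+ s0.
Proof.
move=> v0; rewrite coef_det (bigD1 s0) //= v0 eqxx mulr1 big1 ?addr0 //.
move=> s ns; case: (boolP (valid s)) => vs /=; last by rewrite mulr0.
case: eqP => [e|_]; last by rewrite mulr0.
by move/eqP: ns; case; apply: mon_inj.
Qed.

Lemma supp_det m : m \in msupp (\det M) -> exists s, valid s /\ mon s = m.
Proof.
rewrite mcoeff_msupp coef_det => hne.
have : exists s : 'S_(N), (valid s && (mon s == m)).
  apply/existsP; apply: contraNT hne; rewrite negb_exists => /forallP h.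
  by apply/eqP; apply: big1 => s _; rewrite (negbTE (h s)) mulr0.
by case=> s /andP[v /eqP e]; exists s.
Qed.

Lemma valid_of_det : \det M != 0 -> exists s, valid s.
Proof.
move=> hne; have := hne; rewrite -msupp_eq0; case E: (msupp _) => [//|m ms] _.
have [s [vs _]] : exists s, valid s /\ mon s = m by apply: supp_det; rewrite E mem_head.
by exists s.
Qed.

Lemma appears_of (s0 : 'S_(N)) (p0 q0 : 'I_N) :
  valid s0 -> s0 p0 = q0 -> isv p0 q0 -> (forall t, valid t -> (nv t <= nv s0)%N) ->
  appears (Mvar p0 q0) (tophom (\det M)).
Proof.
move=> v0 e0 hv hmax.
have c0 := coef_mon v0.
have hin : mon s0 \in msupp (\det M).
  by rewrite mcoeff_msupp c0 signr_eq0.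
have hsize : msize (\det M) = (nv s0).+1.
  apply/eqP; rewrite eqn_leq; apply/andP; split.
  - rewrite msizeE; apply/bigmax_leqP_seq => m hm _.
    have [t [vt <-]] := supp_det hm; rewrite mdeg_mon ltnS; exact: hmax.
  - by rewrite -mdeg_mon; exact: msize_mdeg_lt.
exists (mon s0); last by rewrite monE e0 hv eqxx.
rewrite /tophom hsize /= mcoeff_msupp pihomogE raddf_sum /=.
rewrite big_mkcond (bigD1_seq (mon s0)) ?msupp_uniq //=.
rewrite mdeg_mon eqxx /= mcoeffZ mcoeffX eqxx mulr1 big1 ?addr0.
  by rewrite c0 signr_eq0.
move=> m nm; case: ifP => _ //; rewrite mcoeffZ mcoeffX (negbTE nm) mulr0 //.
Qed.

End Mat.

Local Open Scope ring_scope.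

Lemma det_zero_row (R : comRingType) n (A : 'M[R]_n) (i0 : 'I_n) :
  (forall y, A i0 y = 0) -> \det A = 0.
Proof. by move=> h; rewrite (expand_det_row _ i0) big1 // => y _; rewrite h mul0r. Qed.

Lemma det_zero_col (R : comRingType) n (A : 'M[R]_n) (j0 : 'I_n) :
  (forall x, A x j0 = 0) -> \det A = 0.
Proof. by move=> h; rewrite (expand_det_col _ j0) big1 // => y _; rewrite h mul0r. Qed.

Section Block.
Variables (K : fieldType) (n n1 n2 : nat).
Hypothesis n1p : (0 < n1)%N.
Hypothesis n2p : (0 < n2)%N.

Lemma rot_lt (y : 'I_(n1 + n2)) : ((if (y < n1)%N then n2 + y else y - n1) < n1 + n2)%N.
Proof. have := ltn_ord y; case: ifP => h; lia. Qed.

Definition rotf (y : 'I_(n1 + n2)) : 'I_(n1 + n2) := Ordinal (rot_lt y).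

Lemma rotf_inj : injective rotf.
Proof.
move=> x y /(congr1 val) /=; have := ltn_ord x; have := ltn_ord y.
case: ifP => hx; case: ifP => hy => *; apply: val_inj => /=; lia.
Qed.

Definition rot : 'S_(n1 + n2) := perm rotf_inj.

Lemma rotE y : val (rot y) = (if (y < n1)%N then n2 + y else y - n1)%N.
Proof. by rewrite permE. Qed.

Local Notation ev := (meval (fun _ : 'I_n => (0 : K))).

Lemma not_irred_block (A : 'M[{mpoly K[n]}]_(n1 + n2)) :
  (forall x y : 'I_(n1 + n2), (n1 <= x)%N -> (n2 <= y)%N -> A x y = 0) ->
  (forall x y : 'I_(n1 + n2), x = 0%N :> nat -> ev (A x y) = 0) ->
  (forall x y : 'I_(n1 + n2), y = 0%N :> nat -> ev (A x y) = 0) ->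
  ~ irreducible_elt (\det A).
Proof.
move=> hz hr hc [_ _ hirr].
set A' := col_perm rot A.
have hA' : \det A' = \det A * (-1) ^+ (rot^-1)%g.
  by rewrite /A' col_permE det_mulmx det_perm.
have hdl : dlsubmx A' = 0.
  apply/matrixP => x y; rewrite !mxE; apply: hz; rewrite /= ?rotE /=.
    lia.
  by rewrite ltn_ord; lia.
have hdet : \det A = ((-1) ^+ (rot^-1)%g * \det (ulsubmx A')) * \det (drsubmx A').
  rewrite -mulrA -(det_ublock _ (ursubmx A')) -hdl submxK hA'.
  by rewrite [\det A * _]mulrC signrMK.
have n1p' : (0 < n1 + n2)%N by lia.
case: (hirr _ _ hdet) => /(rmorph_unit ev); rewrite unitfE.
- rewrite rmorphM /= -det_map_mx (@det_zero_row _ _ _ (Ordinal n1p)) ?mulr0 ?eqxx //.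
  by move=> y; rewrite !mxE; apply: hr.
- rewrite -det_map_mx (@det_zero_col _ _ _ (Ordinal n2p)) ?eqxx //.
  move=> x; rewrite !mxE; apply: hc; rewrite rotE /=.
  by case: ifP => h //; lia.
Qed.

End Block.

Local Open Scope ring_scope.

Lemma det_castmx (R : comRingType) m n (e : m = n) (A : 'M[R]_m) :
  \det (castmx (e, e) A) = \det A.
Proof. by case: n / e. Qed.

Section Red.
Variables (K : fieldType) (i j : seq nat).
Hypothesis hsz : size i = size j.
Hypothesis hsum : sumn i = sumn j.
Hypothesis pos1 : (0 < PP i 1)%N.
Hypothesis pos2 : (QQ j (size i).-1 < sumn i)%N.
Hypothesis r0 : (0 < size i)%N.

Local Notation N := (Nsz i).
Local Notation rb := (rowblk i).
Local Notation cb := (colblk j).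
Local Notation PP := (PP i).
Local Notation QQ := (QQ j).
Local Notation isv := (isv i j).
Local Notation ison := (ison i j).

Lemma rb0 p : p = 0%N -> rb p = 0%N.
Proof. move=> ->; apply: rb_uniq => //; rewrite PP0; lia. Qed.

Lemma cb0 q : q = 0%N -> (0 < N)%N -> cb q = (size i).-1.
Proof.
move=> -> hN; rewrite /Nsz in hN; apply: (cb_uniq hsz hsum).
- by rewrite prednK.
- by [].
- rewrite prednK // (QQr hsz hsum (leqnn (size i))); apply/andP; split; lia.
Qed.

Lemma red_block u : (0 < u)%N -> QQ u.-1 = PP u -> (0 < PP u)%N -> (PP u < N)%N ->
  ~ irreducible_elt (\det (Mij K i j)).
Proof.
move=> u0 equ hp1 hp2.
set n1 := PP u; set n2 := (N - n1)%N.
have e : N = (n1 + n2)%N by rewrite /n2; lia.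
rewrite -(det_castmx e).
have n2p : (0 < n2)%N by rewrite /n2; lia.
apply: (not_irred_block hp1 n2p).
- move=> x y hx hy; rewrite castmxE M_entry.
  set x' := cast_ord _ x; set y' := cast_ord _ y.
  have hx' : (PP u <= x')%N by rewrite /x' /=.
  have hy' : (n2 <= y')%N by rewrite /y' /=.
  move: hx'; rewrite -(rb_ge hsz hsum u (ltn_ord x')) => hrb.
  have hcb : ~~ (u.-1 <= cb y')%N.
    rewrite (cb_ge hsz hsum) // equ -/n1 -ltnNge.
    have := ltn_ord y'; rewrite /Nsz -/(Nsz i); lia.
  rewrite /isv /ison; rewrite -ltnNge in hcb.
  have -> : (rb x' <= cb y')%N = false by apply/negbTE; rewrite -ltnNge; lia.
  have -> : ((cb y').+1 == rb x') = false by apply/negbTE/eqP; lia.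
  by [].
- move=> x y hx; rewrite castmxE M_entry.
  have -> : isv (cast_ord (esym (e, e).1) x) (cast_ord (esym (e, e).2) y).
    by rewrite /isv rb0.
  by rewrite mevalXU.
- move=> x y hy; rewrite castmxE M_entry.
  have -> : isv (cast_ord (esym (e, e).1) x) (cast_ord (esym (e, e).2) y).
    rewrite /isv cb0 //; last by have := ltn_ord x; lia.
    have [h _] := rb_spec (ltn_ord (cast_ord (esym (e, e).1) x)); lia.
  by rewrite mevalXU.
Qed.

End Red.

Local Open Scope ring_scope.

Lemma pos1_of (i : seq nat) : all (fun x => 0 < x)%N i -> (0 < size i)%N -> (0 < PP i 1)%N.
Proof. by case: i => [//|a l] /= /andP[ha _] _; rewrite /PP /= take0 /= addn0. Qed.

Lemma pos2_of (i j : seq nat) : size i = size j -> sumn i = sumn j ->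
  all (fun x => 0 < x)%N j -> (0 < size i)%N -> (QQ j (size i).-1 < sumn i)%N.
Proof.
move=> hsz hsum hpj r0; rewrite hsum /QQ.
have hlt : ((size j).-1 < size j)%N by rewrite -hsz prednK.
rewrite -{2}(cat_take_drop (size i).-1 j) sumn_cat hsz (drop_nth 0%N hlt) /=.
have h : (0 < nth 0%N j (size j).-1)%N := allP hpj _ (mem_nth 0%N hlt).
lia.
Qed.

Unset Implicit Arguments.

Theorem corollary6p5 (K : fieldType) (i j : seq nat) :
  size i = size j ->
  all (fun x => 0 < x)%N i -> all (fun x => 0 < x)%N j ->
  sumn i = sumn j ->
  \det (Mij K i j) != 0 ->
  irreducible_elt (\det (Mij K i j)) ->
  forall p q : 'I_(Nsz i), rowblk i p = colblk j q ->
    appears (Mvar p q) (tophom (\det (Mij K i j))).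
Proof.
move=> hsz hpi hpj hsum hdet hirr p q e.
have hN : (0 < Nsz i)%N := leq_ltn_trans (leq0n _) (ltn_ord p).
have r0 : (0 < size i)%N by move: hN; rewrite /Nsz; case: (i).
have p1 := pos1_of hpi r0.
have p2 := pos2_of hsz hsum hpj r0.
have [s vs] := valid_of_det hdet.
have hc2 : forall t, (0 < t)%N -> (QQ j t.-1 <= PP i t)%N.
  by move=> t t0; exact: (cut2 hsz hsum vs t0).
have hC : forall t, (0 < t)%N -> (t < size i)%N -> (PP i t < QQ j t)%N ->
    (QQ j t.-1 < PP i t)%N /\ (QQ j t < PP i t.+1)%N.
  move=> t t0 tr hlt.
  have h1 := hc2 t t0; have h2 := hc2 t.+1 (ltn0Sn t); rewrite /= in h2.
  have m1 := PP_mono i t0; have m2 := PP_mono i (ltn0Sn t).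
  have q1 := QQN hsum t.
  split.
  - rewrite ltn_neqAle h1 andbT; apply/negP => /eqP eq.
    apply: (red_block hsz hsum p1 p2 r0 t0 eq _ _ hirr); lia.
  - rewrite ltn_neqAle h2 andbT; apply/negP => /eqP eq.
    have q2 := QQ_mono j (_ : (t <= (size i).-1)%N).
    apply: (red_block hsz hsum p1 p2 r0 (ltn0Sn t) eq _ _ hirr); first lia.
    have := q2 (ltac:(lia)); rewrite /Nsz; lia.
have [s0 [v0 e0 hmax]] := comb_main hsz hsum hc2 hC e.
apply: (appears_of K hsz hsum v0 e0 _ hmax).
by rewrite /isv e.
Qed.
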